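(* Let $(X(n),V(n))_{n\ge0}$ be a solution of the discrete Motsch–Tadmor model (as in the context), and assume there is an integer $n^\infty>0$ with $\|\Delta^x(n)\|_F\le M$ for all $n<n^\infty$ and $\|\Delta^x(n^\infty)\|_F>M$. Let $s_0<s_1<\dots<s_K$ be the distinct elements of the set $\{\|\Delta^x(n)\|_F:\ 0\le n\le n^\infty,\ \|\Delta^x(n)\|_F\ge\|\Delta^x(0)\|_F\}$, listed in increasing order. Then $s_0=\|\Delta^x(0)\|_F$, $s_K=\|\Delta^x(n^\infty)\|_F$, and \[ \sum_{q=0}^{K-1}(s_{q+1}-s_q)\,\psi(s_q)\le\sum_{n=0}^{n^\infty-1}\big(\|\Delta^x(n+1)\|_F-\|\Delta^x(n)\|_F\big)\,\psi(\|\Delta^x(n)\|_F). \]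
   Context: Discrete MT model: fix $N\ge1$, $d\ge1$, $\kappa>0$, $h>0$, and $a:[0,\infty)\to\mathbb{R}$ with constants $0<c_1\le c_2$, $c_1\le a\le c_2$, $|a(r_1)-a(r_2)|\le L_a|r_1-r_2|$ ($L_a>0$); $0<h<\min\{1,1/\kappa\}$. A solution satisfies $x_i(n+1)=x_i(n)+hv_i(n)$, $v_i(n+1)=v_i(n)+h\kappa\sum_j\phi_{ij}(n)(v_j(n)-v_i(n))$ with $\phi_{ij}(n)=\frac{a(\|x_i(n)-x_j(n)\|)}{\sum_ka(\|x_i(n)-x_k(n)\|)}$, $x_i,v_i\in\mathbb{R}^d$. Notation: $\|\Delta^x(n)\|_F=(\sum_{i,j}\|x_i(n)-x_j(n)\|^2)^{1/2}$. Constants: $\|\phi\|_{\mathrm{Lip}}=\frac{L_a}{Nc_1}(1+\frac{c_2}{c_1})$, $M=\frac{1}{4N\|\phi\|_{\mathrm{Lip}}}$, $\psi(s)=1-\|\phi\|_{\mathrm{Lip}}Ns$. *)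

(* Defs.v *)
From HB Require Import structures.
From mathcomp Require Import all_boot all_order all_algebra.
From mathcomp Require Import reals.
Set Implicit Arguments. Unset Strict Implicit. Unset Printing Implicit Defensive.
Import Order.TTheory GRing.Theory Num.Theory.
Local Open Scope ring_scope.

Section MT.
Variable R : realType.

Definition enorm (d : nat) (v : 'rV[R]_d) : R :=
  Num.sqrt (\sum_(k < d) (v 0 k) ^+ 2).

Definition mt_phi (N d : nat) (a : R -> R) (x : 'I_N -> 'rV[R]_d) (i j : 'I_N) : R :=
  a (enorm (x i - x j)) / \sum_(k < N) a (enorm (x i - x k)).

Definition MT_solution (N d : nat) (kappa h : R) (a : R -> R)
    (x v : nat -> 'I_N -> 'rV[R]_d) : Prop :=
  forall (n : nat) (i : 'I_N),
    x n.+1 i = x n i + h *: v n i /\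
    v n.+1 i = v n i + (h * kappa) *: \sum_(j < N) (mt_phi a (x n) i j *: (v n j - v n i)).

Definition DeltaF (N d : nat) (x : nat -> 'I_N -> 'rV[R]_d) (n : nat) : R :=
  Num.sqrt (\sum_(i < N) \sum_(j < N) (enorm (x n i - x n j)) ^+ 2).

Definition phiLip (N : nat) (c1 c2 La : R) : R :=
  La / (N%:R * c1) * (1 + c2 / c1).

Definition Mconst (N : nat) (c1 c2 La : R) : R :=
  1 / (4 * N%:R * phiLip N c1 c2 La).

Definition psi (N : nat) (c1 c2 La : R) (s : R) : R :=
  1 - phiLip N c1 c2 La * N%:R * s.

Definition level_seq (N d : nat) (x : nat -> 'I_N -> 'rV[R]_d) (ninf : nat) : seq R :=
  sort <=%R (undup [seq DeltaF x n | n <- iota 0 ninf.+1 & DeltaF x 0 <= DeltaF x n]).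

End MT.

(* Main.v *)
Require Import Defs.
From mathcomp Require Import all_boot all_order all_algebra.
From mathcomp Require Import reals ring lra.
Import Order.TTheory GRing.Theory Num.Theory.
Local Open Scope ring_scope.

Lemma tele_psi (R : realType) (c : R) (u : nat -> R) n :
  \sum_(i < n) (u i.+1 - u i) * (1 - c * u i) =
  (u n - c / 2 * u n ^+ 2) - (u 0%N - c / 2 * u 0%N ^+ 2)
  + c / 2 * \sum_(i < n) (u i.+1 - u i) ^+ 2.
Proof.
elim: n => [|n IH]; first by rewrite !big_ord0; ring.
rewrite !big_ord_recr /= IH.
have h2 : (2 : R) != 0 by rewrite pnatr_eq0.
by field.
Qed.

Lemma cross_lem (P : nat -> bool) m : P 0%N -> ~~ P m ->
  exists n, (n < m)%N /\ P n /\ ~~ P n.+1.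
Proof.
move=> P0; elim: m => [|m IH]; first by rewrite P0.
move=> Pm1; case Pm: (P m).
  by exists m; rewrite ltnSn Pm.
have [n [h1 h2]] := IH (negbT Pm); exists n; split=> //; exact: ltnW.
Qed.

Lemma clamp_sum (R : realType) (u : nat -> R) K lo hi : lo <= hi ->
  (forall q, (q < K)%N -> u q <= u q.+1) ->
  \sum_(q < K | (lo <= u q) && (u q.+1 <= hi)) (u q.+1 - u q) ^+ 2 <= (hi - lo) ^+ 2.
Proof.
move=> lh mono.
apply: (@le_trans _ _ (\sum_(q < K | (lo <= u q) && (u q.+1 <= hi)) (u q.+1 - u q) * (hi - lo))).
  apply: ler_sum => q /andP[h1 h2]; rewrite expr2; apply: ler_wpM2l.
    have := mono q (ltn_ord q); lra.
  lra.
rewrite -mulr_suml expr2; apply: ler_wpM2r; first lra.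
pose t q := if u q < lo then lo else if hi < u q then hi else u q.
apply: (@le_trans _ _ (\sum_(q < K) (t q.+1 - t q))).
  rewrite big_mkcond /=; apply: ler_sum => q _.
  have := mono q (ltn_ord q); rewrite /t.
  case: ifP => /andP; rewrite ?negb_and.
    move=> [h1 h2] hm.
    case: (ltP (u q) lo) => h3; first lra.
    case: (ltP hi (u q)) => h4; first lra.
    case: (ltP (u q.+1) lo) => h5; first lra.
    case: (ltP hi (u q.+1)) => h6; lra.
  move=> _ hm.
  case: (ltP (u q) lo) => h3; case: (ltP hi (u q)) => h4;
  case: (ltP (u q.+1) lo) => h5; case: (ltP hi (u q.+1)) => h6; lra.
rewrite -(big_mkord xpredT (fun q => t q.+1 - t q)) telescope_sumr // /t.
case: (ltP (u K) lo) => h3; case: (ltP hi (u K)) => h4;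
case: (ltP (u 0%N) lo) => h5; case: (ltP hi (u 0%N)) => h6; lra.
Qed.

Theorem lemmaA1 (R : realType) (N d : nat) (kappa h c1 c2 La : R) (a : R -> R)
    (x v : nat -> 'I_N -> 'rV[R]_d) (ninf : nat) :
  (1 <= N)%N -> (1 <= d)%N -> 0 < kappa -> 0 < h -> h < 1 -> h < 1 / kappa ->
  0 < c1 -> c1 <= c2 -> 0 < La ->
  (forall r, 0 <= r -> c1 <= a r /\ a r <= c2) ->
  (forall r1 r2, 0 <= r1 -> 0 <= r2 -> `|a r1 - a r2| <= La * `|r1 - r2|) ->
  MT_solution kappa h a x v ->
  (0 < ninf)%N ->
  (forall n, (n < ninf)%N -> DeltaF x n <= Mconst N c1 c2 La) ->
  Mconst N c1 c2 La < DeltaF x ninf ->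
  let s := level_seq x ninf in
  let K := (size s).-1 in
  nth 0 s 0 = DeltaF x 0 /\
  nth 0 s K = DeltaF x ninf /\
  \sum_(q < K) (nth 0 s q.+1 - nth 0 s q) * psi N c1 c2 La (nth 0 s q)
    <= \sum_(n < ninf) (DeltaF x n.+1 - DeltaF x n) * psi N c1 c2 La (DeltaF x n).
Proof.
move=> HN Hd Hk Hh Hh1 Hhk Hc1 Hc12 HLa Ha HaL Hsol Hninf HM HMinf s K.
have Hsorted : sorted <=%R s by apply: sort_sorted; exact: le_total.
have memS : forall w, w \in s <->
    exists2 n, (n <= ninf)%N & (DeltaF x 0 <= DeltaF x n) /\ w = DeltaF x n.
  move=> w; rewrite /s /level_seq mem_sort mem_undup; split.
    move=> /mapP[n]; rewrite mem_filter mem_iota add0n ltnS => /andP[h1 /andP[_ h2]] ->.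
    by exists n.
  move=> [n h1 [h2 ->]]; apply: map_f; rewrite mem_filter mem_iota add0n ltnS h1 h2.
  by [].
have D0s : DeltaF x 0 \in s by apply/memS; exists 0%N.
have Dis : DeltaF x ninf \in s.
  by apply/memS; exists ninf => //; split => //; apply: ltW; apply: le_lt_trans (HM 0%N Hninf) HMinf.
have spos : (0 < size s)%N by case: (s) D0s.
have mono : forall i j, (i <= j)%N -> (j < size s)%N -> nth 0 s i <= nth 0 s j.
  move=> i j hij hj; apply: (sorted_leq_nth le_trans lexx) => //.
  by rewrite inE (leq_ltn_trans hij hj).
have lb : forall w, w \in s -> DeltaF x 0 <= w.
  by move=> w /memS[n _ [hh ->]].
have ub : forall w, w \in s -> w <= DeltaF x ninf.
  move=> w /memS[n hn [_ ->]]; move: hn; rewrite leq_eqVlt => /orP[/eqP->//|hn].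
  by apply: ltW; apply: le_lt_trans (HM n hn) HMinf.
have KS : (K < size s)%N by rewrite /K prednK.
have s0 : nth 0 s 0 = DeltaF x 0.
  apply: le_anti; rewrite lb ?mem_nth // andbT.
  rewrite -{1}(nth_index 0 D0s); apply: mono => //; by rewrite index_mem.
have sK : nth 0 s K = DeltaF x ninf.
  apply: le_anti; rewrite ub ?mem_nth //=.
  rewrite -{1}(nth_index 0 Dis); apply: mono => //.
  by rewrite /K -ltnS prednK // index_mem.
split => //; split => //.
rewrite /psi (tele_psi _ _ (nth 0 s)) (tele_psi _ _ (DeltaF x)) s0 sK lerD2l.
have c_ge0 : 0 <= phiLip N c1 c2 La * N%:R / 2.
  rewrite /phiLip; apply: divr_ge0 => //; apply: mulr_ge0 => //.
  apply: mulr_ge0; first apply: divr_ge0; [lra| apply: mulr_ge0 => //; lra|].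
  apply: addr_ge0 => //; apply: divr_ge0; lra.
apply: ler_wpM2l => //.
pose cov n q := (Order.min (DeltaF x n) (DeltaF x n.+1) <= nth 0 s q) &&
                (nth 0 s q.+1 <= Order.max (DeltaF x n) (DeltaF x n.+1)).
apply: (@le_trans _ _ (\sum_(q < K) \sum_(n < ninf)
    (if cov n q then (nth 0 s q.+1 - nth 0 s q) ^+ 2 else 0))).
  apply: ler_sum => q _.
  have hq1 : (q.+1 < size s)%N by rewrite (leq_ltn_trans _ KS).
  have := mono q q.+1 (leqnSn _) hq1; rewrite le_eqVlt => /orP[/eqP <-|hlt].
    rewrite subrr expr0n /=; apply: sumr_ge0 => n _; case: ifP => _ //; rewrite ?lexx.
  have P0 : DeltaF x 0 <= nth 0 s q.
    by rewrite -s0; apply: mono => //; exact: ltn_trans hq1.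
  have Pn : ~~ (DeltaF x ninf <= nth 0 s q).
    by rewrite -sK -ltNge; apply: lt_le_trans hlt _; apply: mono.
  have [n [hn [h1 h2]]] := @cross_lem (fun n => DeltaF x n <= nth 0 s q) ninf P0 Pn.
  rewrite /= -ltNge in h2.
  have hn1s : DeltaF x n.+1 \in s.
    apply/memS; exists n.+1 => //; split => //; rewrite -s0.
    apply: ltW; apply: le_lt_trans h2; apply: mono => //; exact: ltn_trans hq1.
  have hj : (q.+1 <= index (DeltaF x n.+1) s)%N.
    rewrite ltnNge; apply/negP => hle.
    have := mono _ _ hle (ltn_trans (ltnSn _) hq1); rewrite nth_index //.
    by rewrite leNgt h2.
  have hc : cov n q.
    rewrite /cov ge_min le_max h1 /=.
    by rewrite -(nth_index 0 hn1s) mono ?index_mem // orbT.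
  rewrite (bigD1 (Ordinal hn)) //= hc lerDl; apply: sumr_ge0 => i _.
  by case: ifP => _ //; exact: sqr_ge0.
rewrite exchange_big /=; apply: ler_sum => n _.
rewrite -big_mkcond /=.
have monoK : forall q, (q < K)%N -> nth 0 s q <= nth 0 s q.+1.
  by move=> q hq; apply: mono => //; rewrite (leq_ltn_trans hq KS).
have [hab|hab] := leP (DeltaF x n) (DeltaF x n.+1).
  have := @clamp_sum _ (nth 0 s) K _ _ hab monoK; rewrite /cov (min_l hab) (max_r hab); exact.
have hab' := ltW hab.
have := @clamp_sum _ (nth 0 s) K _ _ hab' monoK; rewrite /cov (min_r hab') (max_l hab').
move=> H; apply: le_trans H _; rewrite -sqrrN opprB.
by [].
Qed.
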